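(* Let $m$ be an even positive integer, let $q,k$ be positive integers, $n=q(k-1)+1$, and ${\bf h}\in\mathbb{R}^{qm(k-1)+1}$. Let $\mathcal{H}_m$ be the $m^{\rm th}$-order $n$-dimensional Hankel tensor and $\mathcal{H}_{qm}$ the $(qm)^{\rm th}$-order $k$-dimensional Hankel tensor, both generated by ${\bf h}$ (i.e. entries $h_{i_1+i_2+\cdots}$, indices starting at $0$). Define $c_1=\min_{0\ne{\bf y}\in\mathbb{R}^k}\|{\bf y}^{\ast q}\|_m^m/\|{\bf y}\|_{qm}^{qm}$ and $c_2=\max_{0\ne{\bf y}\in\mathbb{R}^k}\|{\bf y}^{\ast q}\|_m^m/\|{\bf y}\|_{qm}^{qm}$ (positive constants depending on $m,n,q$). Then $\lambda_{\min}(\mathcal{H}_{qm})\ge c_1\,\lambda_{\min}(\mathcal{H}_m)$ if $\mathcal{H}_{qm}$ is positive semi-definite, and $\lambda_{\min}(\mathcal{H}_{qm})\ge c_2\,\lambda_{\min}(\mathcal{H}_m)$ otherwise; and $\lambda_{\max}(\mathcal{H}_{qm})\le c_1\,\lambda_{\max}(\mathcal{H}_m)$ if $\mathcal{H}_{qm}$ is negative semi-definite, and $\lambda_{\max}(\mathcal{H}_{qm})\le c_2\,\lambda_{\max}(\mathcal{H}_m)$ otherwise.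
   Context: For ${\bf u}\in\mathbb{R}^{n_1}$, ${\bf v}\in\mathbb{R}^{n_2}$ (indexed from $0$), the convolution ${\bf u}\ast{\bf v}\in\mathbb{R}^{n_1+n_2-1}$ has entries $({\bf u}\ast{\bf v})_j=\sum_{i=0}^j u_iv_{j-i}$ (with $u_i=0$ for $i\ge n_1$, $v_i=0$ for $i\ge n_2$); ${\bf y}^{\ast q}={\bf y}\ast\cdots\ast{\bf y}$ ($q$ factors), so ${\bf y}^{\ast q}\in\mathbb{R}^{q(k-1)+1}=\mathbb{R}^n$ for ${\bf y}\in\mathbb{R}^k$. $\|\cdot\|_p$ is the $\ell_p$-norm. For a real $m^{\rm th}$-order $n$-dimensional tensor $\mathcal{T}$, $(\mathcal{T}{\bf x}^{m-1})_i=\sum_{i_2,\dots,i_m}\mathcal{T}_{i i_2\dots i_m}x_{i_2}\cdots x_{i_m}$; a real $\lambda$ is an H-eigenvalue if there is nonzero ${\bf x}\in\mathbb{R}^n$ with $\mathcal{T}{\bf x}^{m-1}=\lambda{\bf x}^{[m-1]}$, where ${\bf x}^{[m-1]}=(x_1^{m-1},\dots,x_n^{m-1})^\top$. $\lambda_{\min}(\cdot)$, $\lambda_{\max}(\cdot)$ denote the smallest and largest H-eigenvalue. An even-order tensor is positive (negative) semi-definite if $\mathcal{T}{\bf x}^m\ge0$ ($\le 0$) for all real ${\bf x}$, where $\mathcal{T}{\bf x}^m=\sum\mathcal{T}_{i_1\dots i_m}x_{i_1}\cdots x_{i_m}$. *)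

(* Defs.v *)
From HB Require Import structures.
From mathcomp Require Import all_boot all_order all_algebra.
From mathcomp Require Import reals.
Set Implicit Arguments. Unset Strict Implicit. Unset Printing Implicit Defensive.
Import Order.TTheory GRing.Theory Num.Theory.
Local Open Scope ring_scope.

(* A real tensor of dimension n is represented by its entry function on
   index sequences (indices in 'I_n, starting at 0); an m-th order tensor
   only uses sequences of length m. *)
Definition tensor (R : realType) (n : nat) := seq 'I_n -> R.

Definition tapply (R : realType) (n m : nat) (T : tensor R n) (x : 'rV[R]_n)
  (i : 'I_n) : R :=
  \sum_(t : (m.-1).-tuple 'I_n) T (i :: tval t) * \prod_(j <- tval t) x 0 j.

Definition tform (R : realType) (n m : nat) (T : tensor R n) (x : 'rV[R]_n) : R :=
  \sum_(t : m.-tuple 'I_n) T (tval t) * \prod_(j <- tval t) x 0 j.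

Definition H_eigenvalue (R : realType) (n m : nat) (T : tensor R n) (l : R) : Prop :=
  exists x : 'rV[R]_n, x != 0 /\ forall i, tapply m T x i = l * (x 0 i) ^+ m.-1.

Definition is_min_H_eigenvalue (R : realType) (n m : nat) (T : tensor R n) (l : R) :=
  H_eigenvalue m T l /\ forall l', H_eigenvalue m T l' -> l <= l'.

Definition is_max_H_eigenvalue (R : realType) (n m : nat) (T : tensor R n) (l : R) :=
  H_eigenvalue m T l /\ forall l', H_eigenvalue m T l' -> l' <= l.

Definition psd_tensor (R : realType) (n m : nat) (T : tensor R n) : Prop :=
  forall x : 'rV[R]_n, 0 <= tform m T x.

Definition nsd_tensor (R : realType) (n m : nat) (T : tensor R n) : Prop :=
  forall x : 'rV[R]_n, tform m T x <= 0.

(* Hankel tensor (of dimension n) generated by h: entries h_{i1 + ... + im}.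
   (For an m-th order n-dim tensor with h of length m(n-1)+1 the index
   sum is always in range, so inord is exact on the relevant entries.) *)
Definition hankel (R : realType) (N n : nat) (h : 'rV[R]_N.+1) : tensor R n :=
  fun s => h 0 (inord (sumn (map (@nat_of_ord n) s))).

Definition vext (R : realType) (k : nat) (y : 'rV[R]_k) (j : nat) : R :=
  match insub j with Some i => y 0 i | None => 0 end.

Definition conv (R : realType) (u v : nat -> R) (j : nat) : R :=
  \sum_(i < j.+1) u i * v (j - i)%N.

Definition convpow (R : realType) (k : nat) (y : 'rV[R]_k) (q : nat) : nat -> R :=
  iter q.-1 (conv (vext y)) (vext y).

Definition conv_ratio (R : realType) (m q k : nat) (y : 'rV[R]_k) : R :=
  (\sum_(j < q * (k - 1) + 1) `|convpow y q j| ^+ m)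
  / (\sum_(i < k) `|y 0 i| ^+ (q * m)).

Definition is_min_ratio (R : realType) (m q k : nat) (c : R) : Prop :=
  (exists2 y : 'rV[R]_k, y != 0 & c = conv_ratio m q y) /\
  forall y : 'rV[R]_k, y != 0 -> c <= conv_ratio m q y.

Definition is_max_ratio (R : realType) (m q k : nat) (c : R) : Prop :=
  (exists2 y : 'rV[R]_k, y != 0 & c = conv_ratio m q y) /\
  forall y : 'rV[R]_k, y != 0 -> conv_ratio m q y <= c.

Arguments hankel {R N} n h _.

(* Main.v *)
Require Import Defs.
From HB Require Import structures.
From mathcomp Require Import all_boot all_order all_algebra.
From mathcomp Require Import reals ring lra zify.
From mathcomp Require Import all_classical all_reals all_analysis.
Set Implicit Arguments. Unset Strict Implicit. Unset Printing Implicit Defensive.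
Import Order.TTheory GRing.Theory Num.Theory.
Import numFieldTopology.Exports numFieldNormedType.Exports.
Local Open Scope ring_scope.

Section Alg.
Variable R : realType.

Definition Phi (phi : nat -> R) (p : {poly R}) := \sum_(s < size p) phi s * p`_s.

Lemma PhiE phi (p : {poly R}) B : (size p <= B)%N -> Phi phi p = \sum_(s < B) phi s * p`_s.
Proof.
move=> hB; rewrite /Phi -!(big_mkord xpredT (fun s => phi s * p`_s)).
rewrite (big_cat_nat (leq0n _) hB) /= [X in _ + X]big1_seq ?addr0 //.
by move=> s /andP[_]; rewrite mem_index_iota => /andP[hs _]; rewrite nth_default // mulr0.
Qed.

Lemma PhiD phi (p r : {poly R}) : Phi phi (p + r) = Phi phi p + Phi phi r.
Proof.
pose B := maxn (size p) (size r).
rewrite (@PhiE _ _ B) ?(@PhiE _ p B) ?(@PhiE _ r B) ?leq_maxl ?leq_maxr //.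
  by rewrite -big_split /=; apply: eq_bigr => i _; rewrite coefD mulrDr.
exact: size_polyD.
Qed.

Lemma PhiZ phi c (p : {poly R}) : Phi phi (c *: p) = c * Phi phi p.
Proof.
rewrite (@PhiE _ _ (size p)) ?size_scale_leq // /Phi mulr_sumr.
by apply: eq_bigr => i _; rewrite coefZ mulrCA.
Qed.

Lemma Phi0 phi : Phi phi 0 = 0.
Proof. by rewrite /Phi size_poly0 big_ord0. Qed.

Lemma Phi_sum phi I (r : seq I) (F : I -> {poly R}) :
  Phi phi (\sum_(i <- r) F i) = \sum_(i <- r) Phi phi (F i).
Proof.
elim: r => [|a r IH]; first by rewrite !big_nil Phi0.
by rewrite !big_cons PhiD IH.
Qed.

Lemma PhiMn phi (p : {poly R}) j : Phi phi (p *+ j) = Phi phi p *+ j.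
Proof.
elim: j => [|j IH]; first by rewrite !mulr0n Phi0.
by rewrite !mulrS PhiD IH.
Qed.

Lemma Phi_shift phi i (Q : {poly R}) : Phi phi ('X^i * Q) = Phi (fun s => phi (i + s)%N) Q.
Proof.
rewrite (@PhiE _ _ (i + size Q)); last first.
  by rewrite (leq_trans (size_polyMleq _ _)) // size_polyXn addSn.
rewrite big_split_ord /= big1 ?add0r; last first.
  by move=> j _; rewrite coefXnM /= ltn_ord mulr0.
rewrite /Phi; apply: eq_bigr => j _; rewrite coefXnM /= ltnNge leq_addr /=.
by rewrite addKn.
Qed.

Lemma PhiM phi N (P Q : {poly R}) : (size P <= N)%N ->
  Phi phi (P * Q) = \sum_(i < N) P`_i * Phi (fun s => phi (i + s)%N) Q.
Proof.
move=> hP.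
have -> : P = \sum_(i < N) P`_i *: 'X^i.
  by rewrite -poly_def; apply/polyP => j; rewrite coef_poly; case: ifP => // /negbT;
    rewrite -leqNgt => hj; rewrite nth_default // (leq_trans hP hj).
rewrite mulr_suml Phi_sum; apply: eq_bigr => i _.
rewrite -scalerAl PhiZ Phi_shift; congr (_ * _).
rewrite -poly_def coef_poly ltn_ord; done.
Qed.

Lemma big_tuple_cons (T : finType) L (F : L.+1.-tuple T -> R) :
  \sum_(t : L.+1.-tuple T) F t = \sum_(x : T) \sum_(t : L.-tuple T) F [tuple of x :: t].
Proof.
rewrite pair_big /=.
rewrite (reindex (fun p : T * L.-tuple T => [tuple of p.1 :: p.2])) //=.
exists (fun t => (thead t, [tuple of behead t])) => [[x t] _ | t _] /=.
  by congr (_, _); apply: val_inj.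
by rewrite [RHS]tuple_eta; apply: val_inj.
Qed.

Lemma vextE N (x : 'rV[R]_N) (j : 'I_N) : vext x j = x 0 j.
Proof. by rewrite /vext valK. Qed.

Definition vpoly N (x : 'rV[R]_N) : {poly R} := \poly_(i < N) vext x i.

Lemma tuple_Phi N (x : 'rV[R]_N) (phi : nat -> R) L :
  \sum_(t : L.-tuple 'I_N) phi (sumn (map (@nat_of_ord N) t)) * \prod_(j <- t) x 0 j
  = Phi phi (vpoly x ^+ L).
Proof.
elim: L phi => [|L IH] phi.
  rewrite (big_pred1 [tuple]) => [|t]; last by apply/esym/eqP; exact: tuple0.
  by rewrite expr0 /Phi size_poly1 big_ord1 coefC /= big_nil.
rewrite big_tuple_cons exprS (@PhiM _ N); last exact: size_poly.
apply: eq_bigr => i _; rewrite -IH mulr_sumr; apply: eq_bigr => t _ /=.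
rewrite big_cons coef_poly ltn_ord vextE; ring.
Qed.

Lemma coef_vpoly N (x : 'rV[R]_N) j : (vpoly x)`_j = vext x j.
Proof.
rewrite coef_poly; case: ifP => // /negbT hj.
by rewrite /vext insubF //; apply/negbTE.
Qed.

Lemma vextD N (x y : 'rV[R]_N) j : vext (x + y) j = vext x j + vext y j.
Proof. by rewrite /vext; case: (insub j) => [a|] /=; rewrite ?mxE ?addr0. Qed.

Lemma vextZ N c (x : 'rV[R]_N) j : vext (c *: x) j = c * vext x j.
Proof. by rewrite /vext; case: (insub j) => [a|] /=; rewrite ?mxE ?mulr0. Qed.

Lemma vpolyD N (x y : 'rV[R]_N) : vpoly (x + y) = vpoly x + vpoly y.
Proof. by apply/polyP => j; rewrite coefD !coef_vpoly vextD. Qed.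

Lemma vpolyZ N c (x : 'rV[R]_N) : vpoly (c *: x) = c *: vpoly x.
Proof. by apply/polyP => j; rewrite coefZ !coef_vpoly vextZ. Qed.

Lemma vpoly_delta N (i : 'I_N) : vpoly (delta_mx 0 i) = 'X^i.
Proof.
apply/polyP => j; rewrite coef_vpoly coefXn /vext.
case: insubP => [a _ <-|hj] /=; first by rewrite mxE eqxx.
by case: eqP => // ej; move: hj; rewrite ej ltn_ord.
Qed.

Definition hk n (phi : nat -> R) : tensor R n := fun s => phi (sumn (map (@nat_of_ord n) s)).

Lemma tform_Phi n M phi (x : 'rV[R]_n) : tform M (hk phi) x = Phi phi (vpoly x ^+ M).
Proof. exact: tuple_Phi. Qed.

Lemma tapply_Phi n M phi (x : 'rV[R]_n) i :
  tapply M (hk phi) x i = Phi (fun s => phi (i + s)%N) (vpoly x ^+ M.-1).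
Proof. rewrite /tapply -tuple_Phi; apply: eq_bigr => t _; done. Qed.

Lemma tform_tapply n M phi (x : 'rV[R]_n) : (0 < M)%N ->
  tform M (hk phi) x = \sum_(i < n) x 0 i * tapply M (hk phi) x i.
Proof.
case: M => // M _; rewrite tform_Phi exprS (@PhiM _ n); last exact: size_poly.
by apply: eq_bigr => i _; rewrite tapply_Phi coef_vpoly vextE.
Qed.

Lemma eigen_form n M phi (x : 'rV[R]_n) l : (0 < M)%N ->
  (forall i, tapply M (hk phi) x i = l * x 0 i ^+ M.-1) ->
  tform M (hk phi) x = l * \sum_(i < n) x 0 i ^+ M.
Proof.
move=> M0 he; rewrite tform_tapply // mulr_sumr; apply: eq_bigr => i _.
by rewrite he mulrCA -exprS prednK.
Qed.

Lemma tformZ n M phi c (x : 'rV[R]_n) : tform M (hk phi) (c *: x) = c ^+ M * tform M (hk phi) x.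
Proof. by rewrite !tform_Phi vpolyZ exprZn PhiZ. Qed.

Lemma convpowE k (y : 'rV[R]_k) q j : (0 < q)%N -> convpow y q j = (vpoly y ^+ q)`_j.
Proof.
case: q => // q _; rewrite /convpow /=.
elim: q j => [|q IH] j; first by rewrite expr1 coef_vpoly.
rewrite iterS /conv exprS coefM; apply: eq_bigr => i _; by rewrite IH coef_vpoly.
Qed.

Lemma lin0 (a : R) (b : nat -> R) K :
  (forall t, 0 <= a * t + \sum_(k < K) b k * t ^+ k.+2) -> a = 0.
Proof.
move=> H.
set S := \sum_(k < K) `|b k|.
have S0 : 0 <= S by apply: sumr_ge0 => k _.
have bnd t : `|t| <= 1 -> \sum_(k < K) b k * t ^+ k.+2 <= t ^+ 2 * S.
  move=> t1; apply: le_trans (ler_norm _) _.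
  apply: le_trans (ler_norm_sum _ _ _) _; rewrite /S mulr_sumr.
  apply: ler_sum => k _; rewrite normrM normrX mulrC ler_wpM2r //.
  rewrite -addn2 exprD (real_normK (num_real t)) ler_piMl ?sqr_ge0 //.
  by rewrite exprn_ile1 ?normr_ge0.
apply/eqP; apply/negPn/negP => a0.
set D := `|a| + S.
have D0 : 0 < D by rewrite /D ltr_wpDr // normr_gt0.
set t := - a / D.
have t1 : `|t| <= 1.
  by rewrite /t normrM normrN normfV (gtr0_norm D0) ler_pdivrMr // mul1r /D lerDl.
have := H t; move: (bnd t t1) => bt Ht.
have E : a * t + t ^+ 2 * S = - (a ^+ 2 * `|a|) / D ^+ 2.
  rewrite /t /D; field; rewrite -/D; exact: lt0r_neq0.
have : 0 <= a * t + t ^+ 2 * S by apply: le_trans Ht _; rewrite lerD2l.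
rewrite E mulNr oppr_ge0 leNgt => /negP; apply; apply: divr_gt0; last exact: exprn_gt0.
apply: mulr_gt0; last by rewrite normr_gt0.
by rewrite lt_def sqrf_eq0 a0 sqr_ge0.
Qed.
Definition gM n M (u : 'rV[R]_n) := \sum_(j < n) u 0 j ^+ M.

Lemma grad_eigen n M phi (c : 'rV[R]_n) l : (0 < M)%N ->
  (forall u : 'rV[R]_n, l * gM M u <= tform M (hk phi) u) -> l * gM M c = tform M (hk phi) c ->
  forall i, tapply M (hk phi) c i = l * c 0 i ^+ M.-1.
Proof.
case: M => // M' _; set M := M'.+1 => hmin hc i.
pose u t := c + t *: delta_mx 0 i.
pose C := vpoly c.
pose P k := Phi phi (C ^+ (M - k) * 'X^(i * k)).
pose b k := (P k - l * c 0 i ^+ (M - k)) *+ 'C(M, k).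
have fE t : tform M (hk phi) (u t) = \sum_(k < M.+1) P k * t ^+ k *+ 'C(M, k).
  rewrite tform_Phi vpolyD vpolyZ vpoly_delta exprDn Phi_sum; apply: eq_bigr => k _.
  by rewrite PhiMn exprZn -scalerAr PhiZ -exprM mulrC.
have gE t : gM M (u t) = gM M c - c 0 i ^+ M + \sum_(k < M.+1) c 0 i ^+ (M - k) * t ^+ k *+ 'C(M, k).
  rewrite /gM (bigD1 i) //= [in RHS](bigD1 i) //=.
  have -> : \sum_(j < n | j != i) u t 0 j ^+ M = \sum_(j < n | j != i) c 0 j ^+ M.
    by apply: eq_bigr => j ji; rewrite /u !mxE eqxx (negbTE ji) mulr0 addr0.
  rewrite /u !mxE !eqxx /= mulr1 -exprDn; ring.
have key t : tform M (hk phi) (u t) - l * gM M (u t)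
    = b 1%N * t + \sum_(0 <= k < M') b k.+2 * t ^+ k.+2.
  have P0 : P 0%N = tform M (hk phi) c by rewrite /P muln0 expr0 mulr1 subn0 tform_Phi.
  rewrite fE gE mulrDr mulr_sumr opprD addrA addrAC.
  have -> : \sum_(k < M.+1) P k * t ^+ k *+ 'C(M, k)
      - \sum_(k < M.+1) l * (c 0 i ^+ (M - k) * t ^+ k *+ 'C(M, k))
      = \sum_(k < M.+1) b k * t ^+ k.
    rewrite -sumrB; apply: eq_bigr => k _; rewrite /b mulrnBl mulrBl -!mulrnAl; ring.
  rewrite -(big_mkord xpredT (fun k => b k * t ^+ k)) !big_nat_recl //.
  rewrite /b subn0 bin0 P0 -hc expr0 expr1 mulr1n; ring.
have : b 1%N = 0.
  apply: (lin0 (b := fun k => b k.+2) (K := M')) => t.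
  rewrite -(big_mkord xpredT (fun k => b k.+2 * t ^+ k.+2)) -key subr_ge0; exact: hmin.
rewrite /b bin1 /= => /eqP; rewrite mulrn_eq0 /= subr_eq0 => /eqP hP.
move: hP; rewrite /P subn1 /= => <-.
by rewrite muln1 mulrC Phi_shift tapply_Phi.
Qed.

End Alg.

Section Ana.
Variable R : realType.

Lemma cont_prod n (s : seq 'I_n) : continuous (fun u : 'rV[R]_n => \prod_(j <- s) u 0 j).
Proof.
elim: s => [|a s IH].
  have -> : (fun u : 'rV[R]_n => \prod_(j <- [::]) u 0 j) = fun=> 1.
    by apply: funext => u; rewrite big_nil.
  exact: cst_continuous.
have -> : (fun u : 'rV[R]_n => \prod_(j <- a :: s) u 0 j)
   = (fun u => u 0 a) \* (fun u => \prod_(j <- s) u 0 j).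
  by apply: funext => u; rewrite big_cons.
move=> x; apply: continuousM; [exact: coord_continuous | exact: IH].
Qed.

Lemma cont_sum n (I : Type) (r : seq I) (F : I -> 'rV[R]_n -> R) :
  (forall a, continuous (F a)) -> continuous (fun u => \sum_(a <- r) F a u).
Proof.
move=> HF; elim: r => [|a r IH].
  have -> : (fun u : 'rV[R]_n => \sum_(a <- [::]) F a u) = fun=> 0.
    by apply: funext => u; rewrite big_nil.
  exact: cst_continuous.
have -> : (fun u : 'rV[R]_n => \sum_(b <- a :: r) F b u)
   = (F a) + (fun u => \sum_(b <- r) F b u).
  by apply: funext => u; rewrite big_cons.
move=> x; apply: continuousD; [exact: HF | exact: IH].
Qed.

Lemma cont_tform n M (T : tensor R n) : continuous (tform M T).
Proof.
apply: cont_sum => t x; apply: continuousM; first exact: cst_continuous.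
exact: cont_prod.
Qed.

Lemma cont_gM n M : continuous (@gM R n M).
Proof.
apply: cont_sum => j x.
have -> : (fun u : 'rV[R]_n => u 0 j ^+ M) = (fun u => \prod_(i <- nseq M j) u 0 i).
  apply: funext => u; elim: M => [|M IH]; first by rewrite big_nil expr0.
  by rewrite /= big_cons -IH exprS.
exact: cont_prod.
Qed.

Lemma gM_ge0 n M (u : 'rV[R]_n) : ~~ odd M -> 0 <= gM M u.
Proof. by move=> hM; apply: sumr_ge0 => j _; exact: exprn_even_ge0. Qed.

Lemma gM_gt0 n M (u : 'rV[R]_n) : ~~ odd M -> u != 0 -> 0 < gM M u.
Proof.
move=> hM u0.
have [j hj] : exists j, u 0 j != 0.
  apply/not_existsP => H; move/eqP: u0; apply; apply/matrixP => a b.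
  rewrite (ord1 a) !mxE; have := H b; by move/negP/negPn/eqP.
rewrite /gM (bigD1 j) //=.
have h1 : 0 < u 0 j ^+ M by rewrite exprn_even_gt0 // hj orbT.
have h2 : 0 <= \sum_(i < n | i != j) u 0 i ^+ M by apply: sumr_ge0 => i _; exact: exprn_even_ge0.
lra.
Qed.

Lemma gMZ n M c (u : 'rV[R]_n) : gM M (c *: u) = c ^+ M * gM M u.
Proof. by rewrite /gM mulr_sumr; apply: eq_bigr => j _; rewrite mxE exprMn. Qed.

Lemma var_min (n M : nat) (phi : nat -> R) : (0 < M)%N -> ~~ odd M ->
  exists l : R, H_eigenvalue M (@hk R n.+1 phi) l /\
            forall u : 'rV[R]_n.+1, l * gM M u <= tform M (hk phi) u.
Proof.
move=> M0 hM.
pose f := tform M (@hk R n.+1 phi).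
pose A := [set u : 'rV[R]_n.+1 | `|u| = 1]%classic.
pose rho u := f u / gM M u.
have Ane : (A !=set0)%classic.
  pose v : 'rV[R]_n.+1 := const_mx 1.
  have v0 : v != 0.
    apply/eqP => /matrixP /(_ 0 0); rewrite !mxE => /eqP; by rewrite oner_eq0.
  by exists (`|v|^-1 *: v); rewrite /A /= normfZV.
have cA : compact A.
  apply: bounded_closed_compact.
    by exists 1; split => // M' M1 x Ax /=; rewrite Ax ltW.
  have nc : continuous (fun u : 'rV[R]_n.+1 => `|u|) := @norm_continuous _ _.
  have c1 : closed [set x : R | x = 1]%classic by apply: closed_eq.
  exact: (proj1 (continuous_closedP _) nc _ c1).
have cont : {within A, continuous rho}%classic.
  apply: continuous_in_subspaceT => x /set_mem Ax.
  have x0 : x != 0 by apply/eqP => x0; move: Ax; rewrite /A /= x0 normr0 => /eqP; rewrite eq_sym oner_eq0.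
  apply: (@continuousM _ _ f (fun u => (gM M u)^-1)); first exact: cont_tform.
  apply: (@cvgV _ _ (nbhs x) _ (gM M) (gM M x)); last exact: cont_gM.
  by rewrite gt_eqF // gM_gt0.
have [c /set_mem cA' cmin] := compact_EVT_min Ane cA cont.
have c0 : c != 0.
  by apply/eqP => c0; move: cA'; rewrite /A /= c0 normr0 => /eqP; rewrite eq_sym oner_eq0.
have gc0 : 0 < gM M c by exact: gM_gt0.
have hineq (u : 'rV[R]_n.+1) : rho c * gM M u <= f u.
  have [->|u0] := eqVneq u 0.
    rewrite -(scale0r 0) gMZ /f tformZ expr0n eqn0Ngt M0 /= !mul0r mulr0; exact: lexx.
  pose s := `|u|^-1.
  have s0 : s != 0 by rewrite invr_eq0 normr_eq0.
  have su : A (s *: u) by rewrite /A /= normfZV.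
  have := cmin (s *: u) (mem_set su).
  rewrite /rho /f tformZ gMZ invfM mulrACA divff ?expf_neq0 // mul1r -/(f u).
  by rewrite ler_pdivlMr // gM_gt0.
exists (rho c); split => //.
exists c; split => //; apply: grad_eigen => //.
by rewrite /rho divfK // gt_eqF.
Qed.

Lemma PhiN (phi : nat -> R) p : Phi (fun s => - phi s) p = - Phi phi p.
Proof. by rewrite /Phi -sumrN; apply: eq_bigr => i _; rewrite mulNr. Qed.

Lemma min_bound (n M : nat) (phi : nat -> R) l : (0 < M)%N -> ~~ odd M ->
  is_min_H_eigenvalue M (@hk R n.+1 phi) l ->
  forall u : 'rV[R]_n.+1, l * gM M u <= tform M (hk phi) u.
Proof.
move=> M0 hM [_ Hl] u.
have [l0 [e0 H0]] := var_min n phi M0 hM.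
apply: le_trans (H0 u); apply: ler_wpM2r; [exact: gM_ge0 | exact: Hl].
Qed.

Lemma max_bound (n M : nat) (phi : nat -> R) l : (0 < M)%N -> ~~ odd M ->
  is_max_H_eigenvalue M (@hk R n.+1 phi) l ->
  forall u : 'rV[R]_n.+1, tform M (hk phi) u <= l * gM M u.
Proof.
move=> M0 hM [_ Hl] u.
have [l0 [[x [x0 e0]] H0]] := var_min n (fun s => - phi s) M0 hM.
have e1 : H_eigenvalue M (@hk R n.+1 phi) (- l0).
  exists x; split => // i; move: (e0 i); rewrite !tapply_Phi PhiN mulNr => <-.
  by rewrite opprK.
have := H0 u; rewrite !tform_Phi PhiN -tform_Phi => h1.
have : - l0 * gM M u <= l * gM M u by apply: ler_wpM2r; [exact: gM_ge0 | exact: Hl].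
rewrite mulNr; lra.
Qed.

End Ana.

Lemma vpoly_conv (R : realType) k q n (y : 'rV[R]_k) : (0 < q)%N -> n = (q * (k - 1) + 1)%N ->
  vpoly (\row_(j < n) convpow y q j) = vpoly y ^+ q.
Proof.
move=> q0 hn; apply/polyP => j; rewrite coef_vpoly /vext; case: insubP => [a _ <-|hj].
  by rewrite mxE convpowE.
rewrite nth_default //; apply: leq_trans (size_poly_exp_leq _ _) _.
have := size_poly k (vext y); rewrite -/(vpoly y) => hs.
rewrite -ltnNge hn in hj; nia.
Qed.

Lemma norm_even (R : realType) (a : R) m : ~~ odd m -> `|a| ^+ m = a ^+ m.
Proof. by move=> hm; rewrite -normrX ger0_norm // exprn_even_ge0. Qed.

Theorem theorem2 (R : realType) (m q k n : nat)
  (hm0 : (0 < m)%N) (hmeven : ~~ odd m) (hq0 : (0 < q)%N) (hk0 : (0 < k)%N)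
  (hn : n = (q * (k - 1) + 1)%N)
  (h : 'rV[R]_(q * m * (k - 1)).+1)
  (c1 c2 : R)
  (hc1 : is_min_ratio m q k c1) (hc2 : is_max_ratio m q k c2)
  (lmin_m lmin_qm lmax_m lmax_qm : R)
  (Hlmin_m : is_min_H_eigenvalue m (hankel n h) lmin_m)
  (Hlmin_qm : is_min_H_eigenvalue (q * m) (hankel k h) lmin_qm)
  (Hlmax_m : is_max_H_eigenvalue m (hankel n h) lmax_m)
  (Hlmax_qm : is_max_H_eigenvalue (q * m) (hankel k h) lmax_qm) :
  (psd_tensor (q * m) (hankel k h) -> c1 * lmin_m <= lmin_qm) /\
  (~ psd_tensor (q * m) (hankel k h) -> c2 * lmin_m <= lmin_qm) /\
  (nsd_tensor (q * m) (hankel k h) -> lmax_qm <= c1 * lmax_m) /\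
  (~ nsd_tensor (q * m) (hankel k h) -> lmax_qm <= c2 * lmax_m).
Proof.
pose phi := fun s => h 0 (inord s).
have hn' : n = (q * (k - 1)).+1 by rewrite hn addn1.
have hn2 : (q * (k - 1)).+1 = (q * (k - 1) + 1)%N by rewrite addn1.
rewrite hn' in Hlmin_m Hlmax_m.
pose xv (y : 'rV[R]_k) : 'rV[R]_(q * (k - 1)).+1 := \row_(j < (q * (k - 1)).+1) convpow y q j.
have qm0 : (0 < q * m)%N by rewrite muln_gt0 hq0.
have qmev : ~~ odd (q * m) by rewrite oddM negb_and hmeven orbT.
have FC y : tform (q * m) (hankel k h) y = tform m (hankel (q * (k - 1)).+1 h) (xv y).
  change (tform (q * m) (@hk R k phi) y = tform m (@hk R (q * (k - 1)).+1 phi) (xv y)).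
  by rewrite !tform_Phi (vpoly_conv y hq0 hn2) exprM.
have RE y : conv_ratio m q y = gM m (xv y) / gM (q * m) y.
  rewrite /conv_ratio /gM -hn2; congr (_ / _); apply: eq_bigr => j _.
    by rewrite mxE norm_even.
  by rewrite norm_even.
have Bmin : forall u, lmin_m * gM m u <= tform m (hankel (q * (k - 1)).+1 h) u.
  have := @min_bound R (q * (k - 1)) m phi lmin_m hm0 hmeven Hlmin_m. exact.
have Bmax : forall u, tform m (hankel (q * (k - 1)).+1 h) u <= lmax_m * gM m u.
  have := @max_bound R (q * (k - 1)) m phi lmax_m hm0 hmeven Hlmax_m. exact.
have rge0 (y : 'rV[R]_k) : 0 <= conv_ratio m q y by rewrite RE divr_ge0 // gM_ge0.
have c10 : 0 <= c1 by case: hc1 => [[y _ ->] _].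
have gqm (y : 'rV[R]_k) : y != 0 -> gM m (xv y) = conv_ratio m q y * gM (q * m) y.
  by move=> y0; rewrite RE divfK // gt_eqF // gM_gt0.
have c12 (y : 'rV[R]_k) : y != 0 -> c1 <= conv_ratio m q y /\ conv_ratio m q y <= c2.
  by move=> y0; split; [exact: hc1.2 | exact: hc2.2].
have [y [y0 ey]] := Hlmin_qm.1.
have [z [z0 ez]] := Hlmax_qm.1.
have fy := eigen_form (phi := phi) qm0 ey.
have fz := eigen_form (phi := phi) qm0 ez.
change (tform (q * m) (hankel k h) y = lmin_qm * gM (q * m) y) in fy.
change (tform (q * m) (hankel k h) z = lmax_qm * gM (q * m) z) in fz.
have Gy := gM_gt0 qmev y0.
have Gz := gM_gt0 qmev z0.
have [c1y cy2] := c12 y y0.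
have [c1z cz2] := c12 z z0.
have low : lmin_m * conv_ratio m q y <= lmin_qm.
  have := Bmin (xv y); rewrite -FC fy gqm // mulrA => H.
  by rewrite -(ler_pM2r Gy).
have upp : lmax_qm <= lmax_m * conv_ratio m q z.
  have := Bmax (xv z); rewrite -FC fz gqm // mulrA => H.
  by rewrite -(ler_pM2r Gz).
split; [|split; [|split]].
- move=> psd; have := psd y; rewrite fy => H.
  have lq : 0 <= lmin_qm by rewrite -(pmulr_lge0 _ Gy).
  have [lm0|lm0] := lerP 0 lmin_m; nra.
- move=> npsd.
  have [y' hy'] : exists y', ~ (0 <= tform (q * m) (hankel k h) y').
    by apply/existsNP.
  have lm0 : lmin_m < 0.
    rewrite ltNge; apply/negP => lm0; apply: hy'; rewrite FC.
    apply: le_trans (Bmin (xv y')); apply: mulr_ge0 => //; exact: gM_ge0.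
  nra.
- move=> nsd; have := nsd z; rewrite fz => H.
  have lq : lmax_qm <= 0 by rewrite -(pmulr_lle0 _ Gz).
  have [lm0|lm0] := lerP lmax_m 0; nra.
- move=> nnsd.
  have [z' hz'] : exists z', ~ (tform (q * m) (hankel k h) z' <= 0).
    by apply/existsNP.
  have lm0 : 0 < lmax_m.
    rewrite ltNge; apply/negP => lm0; apply: hz'; rewrite FC.
    apply: le_trans (Bmax (xv z')) _; apply: mulr_le0_ge0 => //; exact: gM_ge0.
  nra.
Qed.
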